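(* Let $\star$ be a star operation on an integral domain $R$. (1) If every nonzero ideal of $R$ is $\star$-basic, then $R$ is completely integrally closed. (2) Every nonzero ideal of $R$ is $v$-basic if and only if $R$ is completely integrally closed.
   Context: A star operation on a domain $R$ with quotient field $K$ is a map $I\mapsto I^\star$ on nonzero fractional ideals with $(aI)^\star=aI^\star$ ($0\ne a\in K$), $R^\star=R$, $I\subseteq I^\star$, $I\subseteq J\Rightarrow I^\star\subseteq J^\star$, $I^{\star\star}=I^\star$. The $v$-operation is $I_v=(I^{-1})^{-1}$ where $I^{-1}=(R:I)=\{x\in K:xI\subseteq R\}$. For a nonzero ideal $I$, an ideal $J\subseteq I$ is a $\star$-reduction of $I$ if $(JI^n)^\star=(I^{n+1})^\star$ for some integer $n\ge0$; $I$ is $\star$-basic if every $\star$-reduction $J$ of $I$ satisfies $J^\star=I^\star$. A domain is completely integrally closed iff every nonzero ideal $I$ is $v$-invertible, i.e. $(II^{-1})_v=R$. *)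

(* Defs.v *)
(* A domain R is modelled as a subring (predicate) of a field K
   which is its quotient field; (fractional) ideals are predicates on K. *)
From HB Require Import structures.
From mathcomp Require Import all_boot all_order all_algebra.
Set Implicit Arguments. Unset Strict Implicit. Unset Printing Implicit Defensive.
Import GRing.Theory.
Local Open Scope ring_scope.

Section Defs.
Variable K : fieldType.

Definition is_domain_with_qf (R : K -> Prop) : Prop :=
  [/\ R 0, R 1,
      (forall x y, R x -> R y -> R (x - y)),
      (forall x y, R x -> R y -> R (x * y)) &
      (forall x, exists a b, [/\ R a, R b, b != 0 & x = a / b])].

Definition subsetK (I J : K -> Prop) : Prop := forall x, I x -> J x.
Definition eqsetK (I J : K -> Prop) : Prop := forall x, I x <-> J x.

Definition submodK (R I : K -> Prop) : Prop :=
  [/\ I 0, (forall x y, I x -> I y -> I (x + y)) &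
      (forall r x, R r -> I x -> I (r * x))].

Definition nz_frac_ideal (R I : K -> Prop) : Prop :=
  [/\ submodK R I, (exists x, I x /\ x != 0) &
      (exists d, [/\ R d, d != 0 & forall x, I x -> R (d * x)])].

Definition nz_ideal (R I : K -> Prop) : Prop :=
  [/\ submodK R I, (exists x, I x /\ x != 0) & subsetK I R].

Definition scaleK (a : K) (I : K -> Prop) : K -> Prop :=
  fun x => exists y, I y /\ x = a * y.

Definition mulK (I J : K -> Prop) : K -> Prop :=
  fun x => exists s : seq (K * K),
    (forall p, p \in s -> I p.1 /\ J p.2) /\ x = \sum_(p <- s) (p.1 * p.2).

Fixpoint powK (R I : K -> Prop) (n : nat) : K -> Prop :=
  match n with
  | 0 => R
  | n'.+1 => mulK I (powK R I n')
  end.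

Definition is_star_op (R : K -> Prop) (star : (K -> Prop) -> (K -> Prop)) : Prop :=
  (forall I, nz_frac_ideal R I -> nz_frac_ideal R (star I)) /\
  [/\ (forall a I, a != 0 -> nz_frac_ideal R I ->
         eqsetK (star (scaleK a I)) (scaleK a (star I))),
      eqsetK (star R) R,
      (forall I, nz_frac_ideal R I -> subsetK I (star I)),
      (forall I J, nz_frac_ideal R I -> nz_frac_ideal R J -> subsetK I J ->
         subsetK (star I) (star J)) &
      (forall I, nz_frac_ideal R I -> eqsetK (star (star I)) (star I))].

Definition invK (R I : K -> Prop) : K -> Prop :=
  fun x => forall y, I y -> R (x * y).

Definition vop (R : K -> Prop) (I : K -> Prop) : K -> Prop := invK R (invK R I).

Definition star_reduction (R : K -> Prop) (star : (K -> Prop) -> (K -> Prop))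
    (J I : K -> Prop) : Prop :=
  subsetK J I /\
  exists n : nat, eqsetK (star (mulK J (powK R I n))) (star (powK R I n.+1)).

Definition star_basic (R : K -> Prop) (star : (K -> Prop) -> (K -> Prop))
    (I : K -> Prop) : Prop :=
  forall J, nz_ideal R J -> star_reduction R star J I -> eqsetK (star J) (star I).

Definition compl_int_closed (R : K -> Prop) : Prop :=
  forall x : K, (exists d, [/\ R d, d != 0 & forall n : nat, R (d * x ^+ n)]) -> R x.

End Defs.

(* Main.v *)
Require Import Defs.
From HB Require Import structures.
From mathcomp Require Import all_boot all_order all_algebra.
From mathcomp Require Import ring.
From Stdlib Require Import FunctionalExtensionality PropExtensionality.
Set Implicit Arguments. Unset Strict Implicit. Unset Printing Implicit Defensive.
Import GRing.Theory.
Local Open Scope ring_scope.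

Section P.
Variable K : fieldType.
Variable R : K -> Prop.
Hypothesis hR : is_domain_with_qf R.

Lemma R0 : R 0. Proof. by case: hR. Qed.
Lemma R1 : R 1. Proof. by case: hR. Qed.
Lemma RM x y : R x -> R y -> R (x * y). Proof. by case: hR => _ _ _ h _; apply: h. Qed.
Lemma RB x y : R x -> R y -> R (x - y). Proof. by case: hR => _ _ h _ _; apply: h. Qed.
Lemma RD x y : R x -> R y -> R (x + y).
Proof. move=> hx hy; have := RB hx (RB R0 hy). by rewrite sub0r opprK. Qed.

Lemma Rsum (T : eqType) (s : seq T) (F : T -> K) :
  (forall p, p \in s -> R (F p)) -> R (\sum_(p <- s) F p).
Proof.
elim: s => [|a s IH] h; first by rewrite big_nil; exact: R0.
rewrite big_cons; apply: RD; first by apply: h; rewrite mem_head.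
by apply: IH => p hp; apply: h; rewrite in_cons hp orbT.
Qed.

Lemma mulK_sub (A B C : K -> Prop) : C 0 -> (forall x y, C x -> C y -> C (x + y)) ->
  (forall a b, A a -> B b -> C (a * b)) -> subsetK (mulK A B) C.
Proof.
move=> h0 hD hM x [s [hs ->]]; elim: s hs => [|p s IH] hs; first by rewrite big_nil.
rewrite big_cons; apply: hD.
  by have [] := hs p (mem_head _ _) => ha hb; apply: hM.
by apply: IH => q hq; apply: hs; rewrite in_cons hq orbT.
Qed.

Lemma mulK0 (A B : K -> Prop) : mulK A B 0. Proof. by exists [::]; rewrite big_nil. Qed.
Lemma mulKD (A B : K -> Prop) x y : mulK A B x -> mulK A B y -> mulK A B (x + y).
Proof.
move=> [s [hs ->]] [t [ht ->]]; exists (s ++ t); rewrite big_cat; split => // p.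
by rewrite mem_cat => /orP [] ?; [apply: hs | apply: ht].
Qed.
Lemma mulK1 (A B : K -> Prop) a b : A a -> B b -> mulK A B (a * b).
Proof. by move=> ha hb; exists [:: (a, b)]; rewrite big_seq1; split => // p; rewrite inE => /eqP ->. Qed.

Lemma eqsetK_eq (A B : K -> Prop) : eqsetK A B -> A = B.
Proof. move=> h; apply: functional_extensionality => x; apply: propositional_extensionality; exact: h. Qed.

Section X.
Variable x d : K.
Definition TT (y : K) := exists s : seq (K * nat),
  (forall p, p \in s -> R p.1) /\ y = \sum_(p <- s) p.1 * x ^+ p.2.

Lemma TT0 : TT 0. Proof. by exists [::]; rewrite big_nil. Qed.
Lemma TTD a b : TT a -> TT b -> TT (a + b).
Proof.
move=> [s [hs ->]] [t [ht ->]]; exists (s ++ t); rewrite big_cat; split => // p.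
by rewrite mem_cat => /orP [] ?; [apply: hs | apply: ht].
Qed.
Lemma TTx c k t : R c -> TT t -> TT (c * x ^+ k * t).
Proof.
move=> hc [s [hs ->]]; exists (map (fun p => (c * p.1, (p.2 + k)%N)) s); split.
  by move=> p /mapP [q hq ->] /=; apply: RM => //; apply: hs.
rewrite big_map mulr_sumr; apply: eq_bigr => p _ /=; rewrite exprD; ring.
Qed.
Lemma TTR c t : R c -> TT t -> TT (c * t).
Proof. by move=> hc ht; have := TTx 0 hc ht; rewrite expr0 mulr1. Qed.
Lemma TT1 c : R c -> TT c.
Proof. by move=> hc; exists [:: (c, 0%N)]; rewrite big_seq1 expr0 mulr1; split => // p; rewrite inE => /eqP ->. Qed.
Lemma TTM a b : TT a -> TT b -> TT (a * b).
Proof.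
move=> [s [hs ->]] hb; elim: s hs => [|p s IH] hs; first by rewrite big_nil mul0r; exact: TT0.
rewrite big_cons mulrDl; apply: TTD; first by apply: TTx => //; apply: hs; rewrite mem_head.
by apply: IH => q hq; apply: hs; rewrite in_cons hq orbT.
Qed.
End X.

Lemma TTx1 x : TT x x.
Proof. exists [:: (1, 1%N)]; rewrite big_seq1 /= mul1r expr1; split => // p; rewrite inE => /eqP -> /=; exact: R1. Qed.

Lemma cic_of_basic (star : (K -> Prop) -> (K -> Prop)) :
 (forall d, R d -> d != 0 -> subsetK (star (scaleK d R)) (scaleK d R)) ->
 (forall I, nz_ideal R I -> subsetK I (star I)) ->
 (forall I, nz_ideal R I -> star_basic R star I) -> compl_int_closed R.
Proof.
move=> hS hI hB x [d [Rd dn0 hd]].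
set I := scaleK d (TT x).
set J := scaleK d R.
have hIsub : subsetK I R.
  move=> y [t [[s [hs ->]] ->]]; rewrite mulr_sumr; apply: Rsum => p hp.
  rewrite mulrA (mulrC d) -mulrA; apply: RM; first exact: hs.
  exact: hd.
have hIid : nz_ideal R I.
  split => //; last by exists d; split => //; exists 1; split; [exact: TT1 R1 | rewrite mulr1].
  split.
  - by exists 0; split; [exact: TT0 | rewrite mulr0].
  - move=> a b [t1 [h1 ->]] [t2 [h2 ->]]; exists (t1 + t2); split; [exact: TTD | by rewrite mulrDr].
  - move=> r a hr [t [ht ->]]; exists (r * t); split; [exact: TTR | ring].
have hJid : nz_ideal R J.
  split; last by move=> y [r [hr ->]]; apply: RM.
  - split.
    + by exists 0; split; [exact: R0 | rewrite mulr0].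
    + move=> a b [t1 [h1 ->]] [t2 [h2 ->]]; exists (t1 + t2); split; [exact: RD | by rewrite mulrDr].
    + move=> r a hr [t [ht ->]]; exists (r * t); split; [exact: RM | ring].
  - by exists d; split => //; exists 1; split; [exact: R1 | rewrite mulr1].
have hMI : mulK I R = I.
  apply: eqsetK_eq => y; split.
  - apply: mulK_sub.
    + by exists 0; split; [exact: TT0 | rewrite mulr0].
    + move=> a b [t1 [h1 ->]] [t2 [h2 ->]]; exists (t1 + t2); split; [exact: TTD | by rewrite mulrDr].
    + move=> a r [t [ht ->]] hr; exists (r * t); split; [exact: TTR | ring].
  - by move=> hy; rewrite -(mulr1 y); apply: mulK1 => //; exact: R1.
have hJI : mulK J I = mulK I I.
  apply: eqsetK_eq => y; split.
  - apply: mulK_sub; [exact: mulK0 | exact: mulKD |].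
    move=> a b [r [hr ->]] hb; apply: mulK1 => //; exists r; split => //; exact: TT1.
  - apply: mulK_sub; [exact: mulK0 | exact: mulKD |].
    move=> a b [t1 [h1 ->]] [t2 [h2 ->]].
    have -> : d * t1 * (d * t2) = (d * 1) * (d * (t1 * t2)) by ring.
    apply: mulK1; first by exists 1; split => //; exact: R1.
    by exists (t1 * t2); split => //; exact: TTM.
have hred : star_reduction R star J I.
  split; first by move=> y [r [hr ->]]; exists r; split => //; exact: TT1.
  by exists 1%N => y /=; rewrite hMI hJI.
have := hB I hIid J hJid hred => hst.
have hdx : I (d * x) by exists x; split => //; exact: TTx1.
have /hst /hS : star I (d * x) by apply: hI.
case/(_ Rd dn0) => y [hy] /(mulfI dn0) ->; exact: hy.
Qed.

Lemma pow_props (I : K -> Prop) n : nz_ideal R I ->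
  subsetK (powK R I n) R /\ exists e, powK R I n e /\ e != 0.
Proof.
move=> [hs [a [ha an0]] hIR]; elim: n => [|n [hPR [e [he en0]]]] /=.
  by split => //; exists 1; split; [exact: R1 | exact: oner_neq0].
split.
  apply: mulK_sub; [exact: R0 | exact: RD |] => x y hx hy; apply: RM; [exact: hIR | exact: hPR].
by exists (a * e); split; [exact: mulK1 | exact: mulf_neq0].
Qed.

Lemma basic_v_of_cic : compl_int_closed R -> forall I, nz_ideal R I -> star_basic R (vop R) I.
Proof.
move=> hC I hI J hJ [hJI [n hn]].
set P := powK R I n.
have [hPR [e [he en0]]] := pow_props n hI.
have key : forall a z, I a -> invK R J z -> R (z * a).
  move=> a z ha hz; set w := z * a.
  have hq : forall q, mulK I P q -> vop R P (z * q).
    move=> q hq u hu.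
    have hqv : vop R (mulK J P) q.
      apply/hn => u' hu'; rewrite mulrC; exact: hu'.
    have := hqv (z * u).
    have -> : q * (z * u) = z * q * u by ring.
    apply; apply: (@mulK_sub _ _ (fun s => R (z * u * s))).
    - by rewrite mulr0; exact: R0.
    - by move=> s t hs ht; rewrite mulrDr; apply: RD.
    - move=> j p hj hp; have -> : z * u * (j * p) = (z * j) * (u * p) by ring.
      by apply: RM; [apply: hz | apply: hu].
  have hw : forall v, vop R P v -> vop R P (w * v).
    move=> v hv u hu.
    have := hv (w * u); have -> : v * (w * u) = w * v * u by ring.
    apply => p hp; have := hq (a * p) (mulK1 ha hp) u hu.
    by have -> : z * (a * p) * u = w * u * p by rewrite /w; ring.
  have hvR : forall v, vop R P v -> R v.
    move=> v hv; rewrite -(mulr1 v); apply: hv => p hp; rewrite mul1r; exact: hPR.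
  apply: hC; exists e; split => //; first exact: hPR.
  move=> m; apply: hvR; elim: m => [|m IH].
    by rewrite expr0 mulr1 => u hu; rewrite mulrC; apply: hu.
  have -> : e * w ^+ m.+1 = w * (e * w ^+ m) by rewrite exprS; ring.
  by apply: hw.
move=> y; split.
  by move=> hy u hu; apply: hy => j hj; apply: hu; apply: hJI.
move=> hy u hu; apply: hy => a ha; exact: key.
Qed.

Lemma nz_frac_R : nz_frac_ideal R R.
Proof.
split.
- split; [exact: R0 | exact: RD | exact: RM].
- by exists 1; split; [exact: R1 | exact: oner_neq0].
- by exists 1; split; [exact: R1 | exact: oner_neq0 | move=> y hy; rewrite mul1r].
Qed.

Lemma nz_frac_of_ideal I : nz_ideal R I -> nz_frac_ideal R I.
Proof.
case=> hs hn hsub; split => //.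
by exists 1; split; [exact: R1 | exact: oner_neq0 | move=> y hy; rewrite mul1r; apply: hsub].
Qed.
End P.

Theorem proposition1p4 (K : fieldType) (R : K -> Prop)
    (hR : is_domain_with_qf R) :
  (forall star : (K -> Prop) -> (K -> Prop), is_star_op R star ->
     (forall I, nz_ideal R I -> star_basic R star I) -> compl_int_closed R) /\
  ((forall I, nz_ideal R I -> star_basic R (vop R) I) <-> compl_int_closed R).
Proof.
split.
  move=> star [_ [hsc hsR hsub _ _]]; apply: (cic_of_basic hR).
  - move=> d Rd dn0 y /(hsc d R dn0 (nz_frac_R hR)) [z [hz ->]].
    by exists z; split => //; apply/hsR.
  - by move=> I hI; apply: hsub; apply: nz_frac_of_ideal.
split; last exact: basic_v_of_cic.
apply: (cic_of_basic hR).
- move=> d Rd dn0 y hy; exists (y / d); split; last by rewrite mulrC divfK.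
  apply: hy => s [r [hr ->]]; by rewrite mulKf.
- by move=> I hI y hy u hu; rewrite mulrC; apply: hu.
Qed.
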